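(* Let $G$ be a finite transitive permutation group with point stabiliser $H$ and let $p$ be a prime. Suppose there exists $T\le H$ such that (i) $N_G(T)\not\le H$, and (ii) for every $S\in\mathrm{Syl}_p(H)$, the group $\langle T,S\rangle$ contains a normal subgroup $H_0$ of $H$ which is weakly closed in $G$ and satisfies $H=N_G(H_0)$. Then $G$ has a subdegree divisible by $p$.
   Context: A subgroup $H_0$ of $H$ is weakly closed in $G$ if whenever $H_0^g\le H$ for some $g\in G$, there exists $h\in H$ with $H_0^g=H_0^h$. A subdegree is the size of an orbit of a point stabiliser. $\mathrm{Syl}_p(H)$ is the set of Sylow $p$-subgroups of $H$. *)

(* Defs.v *)
From mathcomp Require Import all_boot all_fingroup all_solvable.
Set Implicit Arguments. Unset Strict Implicit. Unset Printing Implicit Defensive.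
Local Open Scope group_scope.

Definition weakly_closed (gT : finGroupType) (H0 H G : {set gT}) : Prop :=
  forall g, g \in G -> H0 :^ g \subset H -> exists2 h, h \in H & H0 :^ g = H0 :^ h.

(* Main.v *)
Require Import Defs.
From mathcomp Require Import all_boot all_fingroup all_solvable.
Local Open Scope group_scope.

Theorem lemma2p2 (Omega : finType) (G : {group {perm Omega}}) (a : Omega) (p : nat) :
  prime p ->
  [transitive G, on [set: Omega] | 'P] ->
  (exists T : {group {perm Omega}},
     [/\ T \subset 'C_G[a | 'P],
         ~~ ('N_G(T) \subset 'C_G[a | 'P]) &
         forall S : {group {perm Omega}}, S \in 'Syl_p('C_G[a | 'P]) ->
           exists H0 : {group {perm Omega}},
             [/\ H0 \subset T <*> S,
                 H0 <| 'C_G[a | 'P],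
                 weakly_closed H0 'C_G[a | 'P] G &
                 'C_G[a | 'P] = 'N_G(H0)]]) ->
  exists b : Omega, (p %| #|orbit 'P 'C_G[a | 'P] b|)%N.
Proof.
move=> pr_p _ [T [sTH nNH hS]].
set H := 'C_G[a | 'P].
have /subsetPn [g /setIP [gG nTg] gH] := nNH.
set b := aperm a g.
exists b.
case: (boolP (p %| #|orbit 'P H b|)%N) => // ndiv; exfalso.
have [P sylP] := Sylow_exists p 'C_H[b | 'P].
have sHbH : 'C_H[b | 'P] \subset H by apply: subsetIl.
have sylPH : P \in 'Syl_p(H).
  rewrite inE; case/and3P: sylP => sPHb pP iP.
  apply/and3P; split => //; first exact: subset_trans sHbH.
  rewrite -(Lagrange_index sHbH sPHb) pnatM iP andbT.
  by rewrite (p'natE _ pr_p) -card_orbit.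
have [H0 [sH0 nH0 wc eqH]] := hS P sylPH.
have sHbHg : 'C_H[b | 'P] \subset H :^ g.
  rewrite /H conjIg (conjGid gG) -(astab1_act 'P) -/b.
  by apply: setSI; apply: subsetIl.
have nT : T :^ g = T by apply/normP.
have sTSHg : T <*> P \subset H :^ g.
  rewrite join_subG -{1}nT conjSg sTH /=.
  apply: subset_trans sHbHg; by case/pHallP: sylP.
have sH0Hg : H0 :^ g^-1 \subset H by rewrite sub_conjgV (subset_trans sH0).
have [h hH eqh] := wc _ (groupVr gG) sH0Hg.
have : g^-1 \in 'N_G(H0).
  rewrite inE groupV gG /=; apply/normP; rewrite eqh.
  by case/andP: nH0 => _ /subsetP /(_ _ hH) /normP.
by rewrite -eqH groupV (negbTE gH).
Qed.
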